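(* Let $\mathcal{X}=\mathcal{X}^{(1)}\times\cdots\times\mathcal{X}^{(d)}$ with each $\mathcal{X}^{(j)}$ finite, $\pi$ a positive probability mass on $\mathcal{X}$, $\emptyset\ne S\subseteq\{1,\dots,d\}$, and $P$ a lazy, ergodic, $\pi$-reversible transition matrix on $\mathcal{X}$. Then $\gamma(P)\le\gamma(P^{(S)}\otimes P^{(-S)})$; in particular $t_{rel}(P)\ge t_{rel}(P^{(S)}\otimes P^{(-S)})$.
   Context: $P$ is lazy if $P(x,x)\ge1/2$ for all $x$. For $S\subseteq\{1,\dots,d\}$: $\pi^{(S)}(x^{(S)})=\sum_{x^{(-S)}}\pi(x)$ and $P^{(S)}(x^{(S)},y^{(S)}):=\frac{\sum_{x^{(-S)},y^{(-S)}}\pi(x)P(x,y)}{\pi^{(S)}(x^{(S)})}$; $P^{(-S)}:=P^{(\{1,\dots,d\}\setminus S)}$. $(P^{(S)}\otimes P^{(-S)})(x,y)=P^{(S)}(x^{(S)},y^{(S)})P^{(-S)}(x^{(-S)},y^{(-S)})$, with stationary distribution $\pi^{(S)}\otimes\pi^{(-S)}$. The right spectral gap of a chain $Q$ with stationary $\mu$ is $\gamma(Q)=\inf_{\mathrm{Var}_\mu f\ne0}\frac{\frac12\sum_{x,y}\mu(x)Q(x,y)(f(x)-f(y))^2}{\mathrm{Var}_\mu(f)}$, and $t_{rel}(Q)=1/\gamma(Q)$. *)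

(* Defs.v *)
From HB Require Import structures.
From mathcomp Require Import all_boot all_order all_algebra.
From mathcomp Require Import classical_sets reals.
Set Implicit Arguments. Unset Strict Implicit. Unset Printing Implicit Defensive.
Import Order.TTheory GRing.Theory Num.Theory.
Local Open Scope ring_scope.
Local Open Scope classical_set_scope.

Section Defs.
Variable R : realType.
Variable X : finType.

Fixpoint kpow (P : X -> X -> R) (n : nat) : X -> X -> R :=
  match n with
  | 0%N => fun x y => if x == y then 1 else 0
  | n'.+1 => fun x y => \sum_(z : X) kpow P n' x z * P z y
  end.

Definition is_prob_mass (mu : X -> R) : Prop :=
  (forall x, 0 <= mu x) /\ \sum_(x : X) mu x = 1.

Definition is_positive_prob_mass (mu : X -> R) : Prop :=
  (forall x, 0 < mu x) /\ \sum_(x : X) mu x = 1.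

Definition is_transition_matrix (P : X -> X -> R) : Prop :=
  (forall x y, 0 <= P x y) /\ (forall x, \sum_(y : X) P x y = 1).

Definition lazy_chain (P : X -> X -> R) : Prop := forall x, 1 / 2 <= P x x.

Definition reversible (mu : X -> R) (P : X -> X -> R) : Prop :=
  forall x y, mu x * P x y = mu y * P y x.

Definition irreducible (P : X -> X -> R) : Prop :=
  forall x y, exists n, 0 < kpow P n x y.

Definition aperiodic (P : X -> X -> R) : Prop :=
  forall x (d : nat), (forall t, (0 < t)%N -> 0 < kpow P t x x -> (d %| t)%N) -> d = 1%N.

Definition ergodic (P : X -> X -> R) : Prop := irreducible P /\ aperiodic P.

Definition expect (mu : X -> R) (f : X -> R) : R := \sum_(x : X) mu x * f x.

Definition variance (mu : X -> R) (f : X -> R) : R :=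
  \sum_(x : X) mu x * (f x - expect mu f) ^+ 2.

Definition dirichlet (mu : X -> R) (Q : X -> X -> R) (f : X -> R) : R :=
  (1 / 2) * \sum_(x : X) \sum_(y : X) mu x * Q x y * (f x - f y) ^+ 2.

Definition spectral_gap (mu : X -> R) (Q : X -> X -> R) : R :=
  inf [set dirichlet mu Q f / variance mu f | f in [set f : X -> R | variance mu f != 0]].

Definition t_rel (mu : X -> R) (Q : X -> X -> R) : R := (spectral_gap mu Q)^-1.
End Defs.

Definition prodsp (d : nat) (T : 'I_d -> finType) : finType :=
  {dffun forall j : 'I_d, T j}.

Section Marginals.
Variable R : realType.
Variables (d : nat) (T : 'I_d -> finType).
Local Notation X := (prodsp T).

Definition agree (S : {set 'I_d}) (x z : X) : bool := [forall j in S, x j == z j].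

(* Since X is in bijection with X^(S) x X^(-S) via x |-> (x^(S), x^(-S)),
   functions of x^(S) are represented as functions on X depending only on
   the coordinates in S. *)
Definition marg (S : {set 'I_d}) (pi : X -> R) : X -> R :=
  fun x => \sum_(z : X | agree S x z) pi z.

Definition margP (S : {set 'I_d}) (pi : X -> R) (P : X -> X -> R) : X -> X -> R :=
  fun x y => (\sum_(x' : X | agree S x x') \sum_(y' : X | agree S y y') pi x' * P x' y')
             / marg S pi x.

Definition tens_dist (S : {set 'I_d}) (pi : X -> R) : X -> R :=
  fun x => marg S pi x * marg (~: S) pi x.

Definition tens_chain (S : {set 'I_d}) (pi : X -> R) (P : X -> X -> R) : X -> X -> R :=
  fun x y => margP S pi P x y * margP (~: S) pi P x y.
End Marginals.

(* Main.v *)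
Require Import Defs.
From HB Require Import structures.
From mathcomp Require Import all_boot all_order all_algebra.
From mathcomp Require Import classical_sets reals.
From mathcomp Require Import ring lra.
Import Order.TTheory GRing.Theory Num.Theory.
Local Open Scope ring_scope.
Set Implicit Arguments. Unset Strict Implicit. Unset Printing Implicit Defensive.
Section Gen.
Variable R : realType.
Variable Y : finType.
Implicit Types (mu : Y -> R) (Q : Y -> Y -> R) (f : Y -> R).

Definition ip mu Q (u v : Y -> R) : R :=
  \sum_(a : Y) \sum_(a' : Y) mu a * Q a a' * u a * v a'.

Lemma rev_swap mu Q (F : Y -> Y -> R) : reversible mu Q ->
  \sum_(y : Y) \sum_(y' : Y) mu y * Q y y' * F y y' =
  \sum_(y : Y) \sum_(y' : Y) mu y * Q y y' * F y' y.
Proof.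
move=> rv; rewrite exchange_big /=; apply: eq_bigr => y _; apply: eq_bigr => y' _.
by rewrite rv.
Qed.

Lemma stoch_sum mu Q (F : Y -> R) : (forall y, \sum_(y' : Y) Q y y' = 1) ->
  \sum_(y : Y) \sum_(y' : Y) mu y * Q y y' * F y = \sum_(y : Y) mu y * F y.
Proof.
move=> st; apply: eq_bigr => y _.
by rewrite -big_distrl /= -big_distrr /= st mulr1.
Qed.

Lemma L2 mu Q (G : Y -> Y -> R) : reversible mu Q ->
  (forall y, \sum_(y' : Y) Q y y' = 1) ->
  \sum_(y : Y) mu y * G y y - \sum_(y : Y) \sum_(y' : Y) mu y * Q y y' * G y y' =
  (1/2) * \sum_(y : Y) \sum_(y' : Y) mu y * Q y y' * (G y y + G y' y' - G y y' - G y' y).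
Proof.
move=> rv st.
have e1 : \sum_(y : Y) \sum_(y' : Y) mu y * Q y y' * (G y y + G y' y' - G y y' - G y' y) =
  \sum_(y : Y) \sum_(y' : Y) mu y * Q y y' * G y y
  + \sum_(y : Y) \sum_(y' : Y) mu y * Q y y' * G y' y'
  - \sum_(y : Y) \sum_(y' : Y) mu y * Q y y' * G y y'
  - \sum_(y : Y) \sum_(y' : Y) mu y * Q y y' * G y' y.
  rewrite -big_split -!sumrB /=; apply: eq_bigr => y _.
  rewrite -big_split -!sumrB /=; apply: eq_bigr => y' _; ring.
rewrite e1 (rev_swap (fun y y' => G y' y') rv) (rev_swap (fun y y' => G y' y) rv) /=.
rewrite !(stoch_sum _ (fun y => G y y) st); lra.
Qed.

Lemma L1 mu Q f : reversible mu Q -> (forall y, \sum_(y' : Y) Q y y' = 1) ->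
  dirichlet mu Q f = \sum_(y : Y) mu y * f y ^+ 2 - ip mu Q f f.
Proof.
move=> rv st.
have := L2 (fun y y' => f y * f y') rv st => /= H.
have -> : ip mu Q f f = \sum_(y : Y) \sum_(y' : Y) mu y * Q y y' * (f y * f y').
  by apply: eq_bigr => y _; apply: eq_bigr => y' _; rewrite mulrA.
have -> : \sum_(y : Y) mu y * f y ^+ 2 = \sum_(y : Y) mu y * (f y * f y).
  by apply: eq_bigr => y _; rewrite expr2.
rewrite H /dirichlet; congr (_ * _); apply: eq_bigr => y _; apply: eq_bigr => y' _.
congr (_ * _); ring.
Qed.
End Gen.
Section Gen2.
Variable R : realType.
Variable Y : finType.
Implicit Types (mu : Y -> R) (Q : Y -> Y -> R) (f : Y -> R).

Lemma ip_psd mu Q e : (forall y, 0 <= mu y) -> (forall y y', 0 <= Q y y') ->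
  reversible mu Q -> (forall y, \sum_(y' : Y) Q y y' = 1) -> lazy_chain Q ->
  0 <= ip mu Q e e.
Proof.
move=> m0 q0 rv st lz.
have E : \sum_(y : Y) \sum_(y' : Y) mu y * Q y y' * (e y + e y') ^+ 2 =
   2 * \sum_(y : Y) mu y * e y ^+ 2 + 2 * ip mu Q e e.
  have -> : \sum_(y : Y) \sum_(y' : Y) mu y * Q y y' * (e y + e y') ^+ 2 =
     \sum_(y : Y) \sum_(y' : Y) mu y * Q y y' * (e y ^+ 2)
     + \sum_(y : Y) \sum_(y' : Y) mu y * Q y y' * (e y' ^+ 2)
     + 2 * \sum_(y : Y) \sum_(y' : Y) mu y * Q y y' * e y * e y'.
    rewrite mulr_sumr -!big_split /=; apply: eq_bigr => y _.
    rewrite mulr_sumr -!big_split /=; apply: eq_bigr => y' _; ring.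
  rewrite (rev_swap (fun y y' => e y' ^+ 2) rv) /=.
  rewrite !(stoch_sum _ (fun y => e y ^+ 2) st) /ip; ring.
have L : 2 * \sum_(y : Y) mu y * e y ^+ 2 <=
   \sum_(y : Y) \sum_(y' : Y) mu y * Q y y' * (e y + e y') ^+ 2.
  rewrite mulr_sumr; apply: ler_sum => y _.
  rewrite (bigD1 y) //=.
  have h1 : 0 <= \sum_(y' | y' != y) mu y * Q y y' * (e y + e y') ^+ 2.
    apply: sumr_ge0 => y' _; apply: mulr_ge0; [exact: mulr_ge0 | exact: sqr_ge0].
  have h2 : 2 * (mu y * e y ^+ 2) <= mu y * Q y y * (e y + e y) ^+ 2.
    have -> : mu y * Q y y * (e y + e y) ^+ 2 = (4 * Q y y) * (mu y * e y ^+ 2) by ring.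
    apply: ler_wpM2r; first by apply: mulr_ge0 => //; exact: sqr_ge0.
    have := lz y; lra.
  lra.
lra.
Qed.

Lemma stationary mu Q y' : reversible mu Q -> (forall y, \sum_(y' : Y) Q y y' = 1) ->
  \sum_(y : Y) mu y * Q y y' = mu y'.
Proof.
move=> rv st; rewrite (eq_bigr (fun y => mu y' * Q y' y)); last by move=> y _; rewrite rv.
by rewrite -mulr_sumr st mulr1.
Qed.

Lemma ip_center mu Q (u v : Y -> R) : reversible mu Q ->
  (forall y, \sum_(y' : Y) Q y y' = 1) -> \sum_(y : Y) mu y = 1 ->
  ip mu Q (fun y => u y - expect mu u) (fun y => v y - expect mu v) =
  ip mu Q u v - expect mu u * expect mu v.
Proof.
move=> rv st s1; set cu := expect mu u; set cv := expect mu v.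
have E1 : \sum_(y : Y) \sum_(y' : Y) mu y * Q y y' * u y = cu.
  by rewrite (stoch_sum _ u st).
have E2 : \sum_(y : Y) \sum_(y' : Y) mu y * Q y y' * v y' = cv.
  rewrite exchange_big /=; rewrite /cv /expect; apply: eq_bigr => y' _.
  by rewrite -(stationary y' rv st) mulr_suml.
have E3 : \sum_(y : Y) \sum_(y' : Y) mu y * Q y y' = 1.
  rewrite -s1; apply: eq_bigr => y _; by rewrite -mulr_sumr st mulr1.
have key : forall a b : R, ip mu Q (fun y => u y - a) (fun y => v y - b) =
  ip mu Q u v - b * (\sum_(y : Y) \sum_(y' : Y) mu y * Q y y' * u y)
  - a * (\sum_(y : Y) \sum_(y' : Y) mu y * Q y y' * v y')
  + a * b * (\sum_(y : Y) \sum_(y' : Y) mu y * Q y y').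
  move=> a b.
  rewrite /ip !mulr_sumr -!sumrB -big_split /=; apply: eq_bigr => y _.
  rewrite !mulr_sumr -!sumrB -big_split /=; apply: eq_bigr => y' _; ring.
rewrite key.
rewrite E1 E2 E3; ring.
Qed.

Lemma ip_sub mu Q (u v : Y -> R) :
  ip mu Q (fun y => u y - v y) (fun y => u y - v y) =
  ip mu Q u u + ip mu Q v v - ip mu Q u v - ip mu Q v u.
Proof.
rewrite /ip -big_split -!sumrB /=; apply: eq_bigr => y _.
rewrite -big_split -!sumrB /=; apply: eq_bigr => y' _; ring.
Qed.

Lemma var_ge0 mu f : (forall y, 0 <= mu y) -> 0 <= variance mu f.
Proof. move=> m0; apply: sumr_ge0 => y _; apply: mulr_ge0 => //; exact: sqr_ge0. Qed.

Lemma dir_ge0 mu Q f : (forall y, 0 <= mu y) -> (forall y y', 0 <= Q y y') ->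
  0 <= dirichlet mu Q f.
Proof.
move=> m0 q0; apply: mulr_ge0; first lra.
apply: sumr_ge0 => y _; apply: sumr_ge0 => y' _.
apply: mulr_ge0; [exact: mulr_ge0 | exact: sqr_ge0].
Qed.

End Gen2.
Section Tens.
Variable R : realType.
Variables A B : finType.

Lemma sumBA (G : A * B -> R) : \sum_(p : A * B) G p = \sum_(b : B) \sum_(a : A) G (a, b).
Proof.
rewrite exchange_big /= (pair_bigA _ (fun a b => G (a, b))) /=.
by apply: eq_bigr => -[a b].
Qed.

Variables (mu1 : A -> R) (P1 : A -> A -> R) (mu2 : B -> R) (P2 : B -> B -> R) (gam : R).
Hypotheses (m1 : forall a, 0 <= mu1 a) (s1 : \sum_(a : A) mu1 a = 1)
  (q1 : forall a a', 0 <= P1 a a') (st1 : forall a, \sum_(a' : A) P1 a a' = 1)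
  (lz1 : lazy_chain P1) (rv1 : reversible mu1 P1)
  (g1 : forall h, gam * variance mu1 h <= dirichlet mu1 P1 h).
Hypotheses (m2 : forall a, 0 <= mu2 a) (s2 : \sum_(a : B) mu2 a = 1)
  (q2 : forall a a', 0 <= P2 a a') (st2 : forall a, \sum_(a' : B) P2 a a' = 1)
  (lz2 : lazy_chain P2) (rv2 : reversible mu2 P2)
  (g2 : forall h, gam * variance mu2 h <= dirichlet mu2 P2 h).

Definition mu12 (p : A * B) := mu1 p.1 * mu2 p.2.
Definition Q12 (p q : A * B) := P1 p.1 q.1 * P2 p.2 q.2.

Lemma rv12 : reversible mu12 Q12.
Proof.
move=> [a b] [a' b']; rewrite /mu12 /Q12 /=.
have := rv1 a a'; have := rv2 b b'.
move=> e2 e1.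
have -> : mu1 a * mu2 b * (P1 a a' * P2 b b') = (mu1 a * P1 a a') * (mu2 b * P2 b b') by ring.
rewrite e1 e2; ring.
Qed.

Lemma st12 p : \sum_(q : A * B) Q12 p q = 1.
Proof.
rewrite sumBA /Q12 /=.
rewrite (eq_bigr (fun b => P2 p.2 b)); first by rewrite st2.
by move=> b _ /=; rewrite -mulr_suml st1 mul1r.
Qed.

Lemma tensor_gap f : gam * variance mu12 f <= dirichlet mu12 Q12 f.
Proof.
pose F a b := f (a, b).
pose fb b := fun a => F a b.
pose h b := expect mu1 (fb b).
have TV : variance mu12 f = \sum_(b : B) mu2 b * variance mu1 (fb b) + variance mu2 h.
  have Ec : expect mu12 f = expect mu2 h.
    rewrite /expect sumBA; apply: eq_bigr => b _.
    by rewrite /h /expect mulr_sumr; apply: eq_bigr => a _; rewrite /mu12 /fb /F /=; ring.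
  rewrite /variance sumBA Ec /expect -/(expect mu2 h) -big_split /=.
  apply: eq_bigr => b _.
  set c := expect mu2 h.
  have Z : \sum_(a : A) mu1 a * (F a b - h b) = 0.
    have -> : \sum_(a : A) mu1 a * (F a b - h b) =
              \sum_(a : A) mu1 a * F a b - h b * \sum_(a : A) mu1 a.
      by rewrite mulr_sumr -sumrB; apply: eq_bigr => a _; ring.
    by rewrite s1 mulr1 /h /expect /fb subrr.
  have -> : \sum_(a : A) mu12 (a, b) * (f (a, b) - c) ^+ 2 =
     mu2 b * \sum_(a : A) mu1 a * (F a b - h b) ^+ 2
     + (2 * mu2 b * (h b - c)) * \sum_(a : A) mu1 a * (F a b - h b)
     + mu2 b * (h b - c) ^+ 2 * \sum_(a : A) mu1 a.
    rewrite !mulr_sumr -!big_split /=; apply: eq_bigr => a _.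
    rewrite /mu12 /F /=; ring.
  by rewrite Z s1 /variance /expect /fb; ring.
pose ip1 := ip mu1 P1.
pose T1 := \sum_(b : B) mu2 b * \sum_(a : A) mu1 a * F a b ^+ 2.
pose T3 := \sum_(b : B) mu2 b * ip1 (fb b) (fb b).
pose T4 := \sum_(b : B) mu2 b * h b ^+ 2.
pose T5 := ip mu2 P2 h h.
pose T6 := \sum_(b : B) \sum_(b' : B) mu2 b * P2 b b' * ip1 (fb b) (fb b').
have D12 : dirichlet mu12 Q12 f = T1 - T6.
  rewrite (L1 _ rv12 st12); congr (_ - _).
    rewrite sumBA; apply: eq_bigr => b _; rewrite mulr_sumr; apply: eq_bigr => a _.
    by rewrite /mu12 /F /=; ring.
  rewrite /ip sumBA /T6; apply: eq_bigr => b _.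
  under eq_bigr => a _ do rewrite sumBA.
  rewrite exchange_big /=; apply: eq_bigr => b' _.
  rewrite /ip1 /ip mulr_sumr; apply: eq_bigr => a _.
  rewrite mulr_sumr; apply: eq_bigr => a' _.
  by rewrite /mu12 /Q12 /fb /F /=; ring.
have D1 : \sum_(b : B) mu2 b * dirichlet mu1 P1 (fb b) = T1 - T3.
  rewrite /T1 /T3 -sumrB; apply: eq_bigr => b _.
  by rewrite (L1 _ rv1 st1) mulrBr.
have D2 : dirichlet mu2 P2 h = T4 - T5 by rewrite (L1 _ rv2 st2).
pose e b := fun a => fb b a - h b.
pose G b b' := ip1 (e b) (e b').
have Rge0 : 0 <= \sum_(b : B) mu2 b * G b b - \sum_(b : B) \sum_(b' : B) mu2 b * P2 b b' * G b b'.
  rewrite (L2 _ rv2 st2); apply: mulr_ge0; first lra.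
  apply: sumr_ge0 => b _; apply: sumr_ge0 => b' _; apply: mulr_ge0.
    exact: mulr_ge0.
  have -> : G b b + G b' b' - G b b' - G b' b =
      ip1 (fun a => e b a - e b' a) (fun a => e b a - e b' a).
    by rewrite /ip1 ip_sub.
  exact: ip_psd.
have GE : forall b b', G b b' = ip1 (fb b) (fb b') - h b * h b'.
  by move=> b b'; rewrite /G /ip1 /e /h ip_center.
have RR : \sum_(b : B) mu2 b * G b b - \sum_(b : B) \sum_(b' : B) mu2 b * P2 b b' * G b b'
   = (T3 - T4) - (T6 - T5).
  congr (_ - _).
    rewrite /T3 /T4 -sumrB; apply: eq_bigr => b _; rewrite GE; ring.
  rewrite /T6 /T5 /ip -sumrB; apply: eq_bigr => b _.
  rewrite -sumrB; apply: eq_bigr => b' _; rewrite GE; ring.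
have V1 : gam * \sum_(b : B) mu2 b * variance mu1 (fb b) <=
          \sum_(b : B) mu2 b * dirichlet mu1 P1 (fb b).
  rewrite mulr_sumr; apply: ler_sum => b _.
  rewrite mulrCA; apply: ler_wpM2l => //; exact: g1.
have V2 := g2 h.
rewrite TV D12 mulrDr.
rewrite D1 D2 RR in V1 V2 Rge0 *.
lra.
Qed.
End Tens.
Section Bij.
Variable R : realType.
Variables Y X : finType.
Variable e : Y -> X.
Hypothesis be : bijective e.

Lemma sum_bij (G : X -> R) : \sum_(x : X) G x = \sum_(y : Y) G (e y).
Proof. exact: (reindex e (onW_bij _ be)). Qed.

Lemma var_bij (mu : X -> R) g (mu' : Y -> R) g' :
  (forall y, mu' y = mu (e y)) -> (forall y, g' y = g (e y)) ->
  variance mu' g' = variance mu g.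
Proof.
move=> hm hg.
have Ex : expect mu' g' = expect mu g.
  by rewrite /expect sum_bij; apply: eq_bigr => y _; rewrite hm hg.
rewrite /variance sum_bij Ex; apply: eq_bigr => y _; by rewrite hm hg.
Qed.

Lemma dir_bij (mu : X -> R) Q g (mu' : Y -> R) Q' g' :
  (forall y, mu' y = mu (e y)) -> (forall y y', Q' y y' = Q (e y) (e y')) ->
  (forall y, g' y = g (e y)) ->
  dirichlet mu' Q' g' = dirichlet mu Q g.
Proof.
move=> hm hq hg; rewrite /dirichlet sum_bij; congr (_ * _); apply: eq_bigr => y _.
rewrite sum_bij; apply: eq_bigr => y' _; by rewrite hm hq !hg.
Qed.
End Bij.

Lemma sumAB (R : realType) (A B : finType) (G : A * B -> R) :
  \sum_(p : A * B) G p = \sum_(a : A) \sum_(b : B) G (a, b).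
Proof. by rewrite (pair_bigA _ (fun a b => G (a, b))) /=; apply: eq_bigr => -[a b]. Qed.

Section Marg.
Variable R : realType.
Variables A B : finType.
Variables (p : A * B -> R) (K : A * B -> A * B -> R) (gam : R).
Hypotheses (pp : forall x, 0 < p x) (ps : \sum_(x : A * B) p x = 1)
  (K0 : forall x y, 0 <= K x y) (stK : forall x, \sum_(y : A * B) K x y = 1)
  (lzK : lazy_chain K) (rvK : reversible p K)
  (HK : forall g, gam * variance p g <= dirichlet p K g).

Definition m1 (a : A) := \sum_(b : B) p (a, b).
Definition N1 (a a' : A) := \sum_(b : B) \sum_(b' : B) p (a, b) * K (a, b) (a', b').
Definition PP1 (a a' : A) := N1 a a' / m1 a.

Lemma m1_pos a : 0 < m1 a.
Proof.
have [b0 _|B0] := pickP (fun _ : B => true).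
  rewrite /m1 (bigD1 b0) //=; apply: ltr_wpDr; last exact: pp.
  by apply: sumr_ge0 => b _; apply: ltW.
exfalso; move: ps; rewrite sumAB big1 ?(@oner_eq0 R) //.
  by move=> /esym /eqP; rewrite oner_eq0.
by move=> a' _; apply: big1 => b; have := B0 b.
Qed.

Lemma m1_sum : \sum_(a : A) m1 a = 1.
Proof. by rewrite -ps sumAB. Qed.

Lemma N1_ge0 a a' : 0 <= N1 a a'.
Proof.
apply: sumr_ge0 => b _; apply: sumr_ge0 => b' _; apply: mulr_ge0 => //; exact: ltW.
Qed.

Lemma PP1_ge0 a a' : 0 <= PP1 a a'.
Proof. apply: divr_ge0; [exact: N1_ge0 | exact: ltW (m1_pos a)]. Qed.

Lemma mPP1 a a' : m1 a * PP1 a a' = N1 a a'.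
Proof. by rewrite /PP1 mulrC divfK // gt_eqF // m1_pos. Qed.

Lemma PP1_st a : \sum_(a' : A) PP1 a a' = 1.
Proof.
rewrite /PP1 -mulr_suml.
have -> : \sum_(a' : A) N1 a a' = m1 a.
  rewrite /N1 exchange_big /m1; apply: eq_bigr => b _.
  under eq_bigr => a' _ do rewrite -mulr_sumr.
  by rewrite -mulr_sumr -sumAB stK mulr1.
by rewrite divff // gt_eqF // m1_pos.
Qed.

Lemma PP1_lazy : lazy_chain PP1.
Proof.
move=> a; rewrite /PP1 ler_pdivlMr ?m1_pos //.
have : m1 a / 2 <= N1 a a.
  rewrite /m1 /N1 mulr_suml; apply: ler_sum => b _.
  rewrite (bigD1 b) //=.
  have h1 : 0 <= \sum_(b' | b' != b) p (a, b) * K (a, b) (a, b').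
    apply: sumr_ge0 => b' _; apply: mulr_ge0 => //; exact: ltW.
  have h2 : p (a, b) / 2 <= p (a, b) * K (a, b) (a, b).
    have := lzK (a, b); have := pp (a, b); nra.
  lra.
lra.
Qed.

Lemma PP1_rev : reversible m1 PP1.
Proof.
move=> a a'; rewrite !mPP1 /N1 exchange_big /=; apply: eq_bigr => b _; apply: eq_bigr => b' _.
by rewrite rvK.
Qed.

Lemma PP1_gap h : gam * variance m1 h <= dirichlet m1 PP1 h.
Proof.
pose g (x : A * B) := h x.1.
have V : variance p g = variance m1 h.
  have Ex : expect p g = expect m1 h.
    rewrite /expect sumAB; apply: eq_bigr => a _; rewrite /m1 mulr_suml.
    by apply: eq_bigr.
  rewrite /variance Ex sumAB; apply: eq_bigr => a _; rewrite /m1 mulr_suml.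
  by apply: eq_bigr.
have D : dirichlet p K g = dirichlet m1 PP1 h.
  rewrite /dirichlet; congr (_ * _).
  rewrite sumAB; apply: eq_bigr => a _.
  under eq_bigr => b _ do rewrite sumAB.
  rewrite exchange_big /=; apply: eq_bigr => a' _.
  rewrite mPP1 /N1 mulr_suml; apply: eq_bigr => b _.
  by rewrite mulr_suml; apply: eq_bigr.
by rewrite -V -D.
Qed.
End Marg.
Section Gap.
Variable R : realType.
Variable X : finType.
Implicit Types (mu : X -> R) (Q : X -> X -> R) (f g : X -> R).

Lemma edge_bound mu Q g x y : (forall z, 0 < mu z) -> (forall z w, 0 <= Q z w) ->
  0 < Q x y -> (g x - g y) ^+ 2 <= (2 / (mu x * Q x y)) * dirichlet mu Q g.
Proof.
move=> m0 q0 qxy.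
have pos : 0 < mu x * Q x y by apply: mulr_gt0.
have T : mu x * Q x y * (g x - g y) ^+ 2 <=
    \sum_(x1 : X) \sum_(y1 : X) mu x1 * Q x1 y1 * (g x1 - g y1) ^+ 2.
  have nn : forall x1 y1, 0 <= mu x1 * Q x1 y1 * (g x1 - g y1) ^+ 2.
    move=> x1 y1; apply: mulr_ge0; [apply: mulr_ge0 => //; exact: ltW | exact: sqr_ge0].
  rewrite (bigD1 x) //= (bigD1 y) //=.
  have h1 : 0 <= \sum_(i | i != y) mu x * Q x i * (g x - g i) ^+ 2.
    by apply: sumr_ge0 => i _.
  have h2 : 0 <= \sum_(i | i != x) \sum_(y1 : X) mu i * Q i y1 * (g i - g y1) ^+ 2.
    by apply: sumr_ge0 => i _; apply: sumr_ge0.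
  lra.
rewrite /dirichlet.
set D := \sum_(x1 : X) _ in T *.
have -> : 2 / (mu x * Q x y) * (1 / 2 * D) = D / (mu x * Q x y).
  by field; rewrite !gt_eqF ?m0.
by rewrite (ler_pdivlMr _ _ pos) mulrC.
Qed.

Lemma kpow_bound mu Q n x y : (forall z, 0 < mu z) -> (forall z w, 0 <= Q z w) ->
  0 < kpow Q n x y ->
  exists C, 0 <= C /\ forall g, (g x - g y) ^+ 2 <= C * dirichlet mu Q g.
Proof.
move=> m0 q0; elim: n y => [|n IH] y /=.
  case: eqP => [<- _|]; last by rewrite ltxx.
  by exists 0; split => // g; rewrite subrr expr0n /= mul0r.
move=> hs.
have [z hz] : exists z, 0 < kpow Q n x z * Q z y.
  case: (boolP [exists z, 0 < kpow Q n x z * Q z y]) => [/existsP//|].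
  rewrite negb_exists => /forallP hn; exfalso.
  have : \sum_(z : X) kpow Q n x z * Q z y <= 0.
    by apply: sumr_le0 => z _; have := hn z; rewrite -leNgt.
  by rewrite leNgt hs.
have q0zy := q0 z y.
have kz : 0 < kpow Q n x z by nra.
have qz : 0 < Q z y by nra.
have [C1 [C1p HC1]] := IH z kz.
exists (2 * C1 + 2 * (2 / (mu z * Q z y))); split.
  apply: addr_ge0; first lra.
  apply: mulr_ge0; first lra.
  by apply: divr_ge0; [lra | apply/ltW/mulr_gt0].
move=> g.
have e1 := HC1 g; have e2 := edge_bound g m0 q0 qz.
have Dg : 0 <= dirichlet mu Q g by apply: dir_ge0 => // w; apply: ltW.
have ineq : (g x - g y) ^+ 2 <= 2 * (g x - g z) ^+ 2 + 2 * (g z - g y) ^+ 2.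
  have := sqr_ge0 ((g x - g z) - (g z - g y)); nra.
set c2 := 2 / (mu z * Q z y) in e2 *.
have -> : (2 * C1 + 2 * c2) * dirichlet mu Q g =
  2 * (C1 * dirichlet mu Q g) + 2 * (c2 * dirichlet mu Q g) by ring.
lra.
Qed.

Lemma unif_bound mu Q : (forall z, 0 < mu z) -> (forall z w, 0 <= Q z w) ->
  irreducible Q ->
  exists C, 0 <= C /\ forall x y g, (g x - g y) ^+ 2 <= C * dirichlet mu Q g.
Proof.
move=> m0 q0 irr.
have Dg : forall g, 0 <= dirichlet mu Q g by move=> g; apply: dir_ge0 => // w; apply: ltW.
suff : forall s : seq (X * X), exists C, 0 <= C /\
    forall xy, xy \in s -> forall g, (g xy.1 - g xy.2) ^+ 2 <= C * dirichlet mu Q g.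
  move=> /(_ (index_enum (X * X)%type)) [C [Cp HC]]; exists C; split => // x y g.
  by have := HC (x, y) (mem_index_enum _) g.
elim => [|[x y] s [C [Cp HC]]].
  by exists 0; split.
have [n hn] := irr x y.
have [C1 [C1p HC1]] := kpow_bound m0 q0 hn.
exists (C + C1); split; first lra.
move=> xy; rewrite inE => /orP [/eqP -> | hin] g /=.
  have := HC1 g; have := Dg g; have := Cp; nra.
have := HC xy hin g; have := Dg g; have := C1p; nra.
Qed.

Lemma var_shift mu f c : \sum_(x : X) mu x = 1 ->
  \sum_(x : X) mu x * (f x - c) ^+ 2 = variance mu f + (expect mu f - c) ^+ 2.
Proof.
move=> s1; set m := expect mu f.
have Z : \sum_(x : X) mu x * (f x - m) = 0.
  have -> : \sum_(x : X) mu x * (f x - m) = \sum_(x : X) mu x * f x - m * \sum_(x : X) mu x.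
    by rewrite mulr_sumr -sumrB; apply: eq_bigr => x _; ring.
  by rewrite s1 mulr1 subrr.
have -> : \sum_(x : X) mu x * (f x - c) ^+ 2 =
   \sum_(x : X) mu x * (f x - m) ^+ 2 + 2 * (m - c) * \sum_(x : X) mu x * (f x - m)
   + (m - c) ^+ 2 * \sum_(x : X) mu x.
  rewrite !mulr_sumr -!big_split /=; apply: eq_bigr => x _; ring.
by rewrite Z s1 /variance -/m; ring.
Qed.

Lemma gap_pos_bound mu Q (x0 : X) : (forall z, 0 < mu z) -> \sum_(x : X) mu x = 1 ->
  (forall z w, 0 <= Q z w) -> irreducible Q ->
  exists c, 0 < c /\ forall g, c * variance mu g <= dirichlet mu Q g.
Proof.
move=> m0 s1 q0 irr.
have [C [Cp HC]] := unif_bound m0 q0 irr.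
exists (1 / (C + 1)); split; first by apply: divr_gt0; lra.
move=> g.
have Dg : 0 <= dirichlet mu Q g by apply: dir_ge0 => // w; apply: ltW.
have V : variance mu g <= C * dirichlet mu Q g.
  have := var_shift g (g x0) s1.
  have := sqr_ge0 (expect mu g - g x0).
  have : \sum_(x : X) mu x * (g x - g x0) ^+ 2 <= \sum_(x : X) mu x * (C * dirichlet mu Q g).
    apply: ler_sum => x _; apply: ler_wpM2l; [exact: ltW | exact: HC].
  rewrite -mulr_suml s1 mul1r; lra.
rewrite mul1r ler_pdivrMl; last lra.
have := Cp; nra.
Qed.

Lemma gap_lb mu Q c : (forall z, 0 <= mu z) ->
  (exists f, variance mu f != 0) -> (forall g, c * variance mu g <= dirichlet mu Q g) ->
  c <= spectral_gap mu Q.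
Proof.
move=> m0 [f hf] H; apply: lb_le_inf.
  by exists (dirichlet mu Q f / variance mu f); exists f.
move=> r [g hg <-].
have vp : 0 < variance mu g by rewrite lt_def hg var_ge0.
by rewrite ler_pdivlMr.
Qed.

Lemma gap_ub mu Q g : (forall z, 0 <= mu z) -> (forall z w, 0 <= Q z w) ->
  spectral_gap mu Q * variance mu g <= dirichlet mu Q g.
Proof.
move=> m0 q0.
have [->|hg] := eqVneq (variance mu g) 0.
  by rewrite mulr0 dir_ge0.
have vp : 0 < variance mu g by rewrite lt_def hg var_ge0.
rewrite -ler_pdivlMr //; apply: ge_inf; last by exists g.
exists 0 => r [h hh <-]; apply: divr_ge0; [exact: dir_ge0 | exact: var_ge0].
Qed.

Lemma var_nonconst mu (x y : X) : (forall z, 0 < mu z) -> x != y ->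
  variance mu (fun z => if z == x then 1 else 0) != 0.
Proof.
move=> m0 nxy; apply/negP; rewrite /variance psumr_eq0; last first.
  by move=> i _; apply: mulr_ge0; [exact: ltW | exact: sqr_ge0].
move=> /allP hall.
have hx := hall x (mem_index_enum x); have hy := hall y (mem_index_enum y).
have nyx : (y == x) = false by rewrite eq_sym; apply/negbTE.
rewrite /= mulf_eq0 gt_eqF // sqrf_eq0 eqxx /= in hx.
rewrite /= mulf_eq0 gt_eqF // sqrf_eq0 nyx /= sub0r oppr_eq0 in hy.
by move: hx; rewrite (eqP hy) subr0 oner_eq0.
Qed.

Lemma var_const mu f : (forall x y : X, x = y) -> \sum_(x : X) mu x = 1 ->
  variance mu f = 0.
Proof.
move=> all1 s1; apply: big1 => x _.
have -> : expect mu f = f x.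
  rewrite /expect (eq_bigr (fun y => mu y * f x)); last by move=> y _; rewrite (all1 y x).
  by rewrite -mulr_suml s1 mul1r.
by rewrite subrr expr0n /= mulr0.
Qed.
End Gap.
Section Prod.
Variable R : realType.
Variables (d : nat) (T : 'I_d -> finType).
Local Notation X := (prodsp T).
Variable S : {set 'I_d}.
Variable x0 : X.

Definition merge (a b : X) : X := [ffun j => if j \in S then a j else b j].

Lemma mergeE a b j : merge a b j = if j \in S then a j else b j.
Proof. by rewrite /merge ffunE. Qed.

Definition predA := fun x : X => merge x x0 == x.
Definition predB := fun x : X => merge x0 x == x.
Definition TA := {x : X | predA x}.
Definition TB := {x : X | predB x}.

Lemma predA_merge x : predA (merge x x0).
Proof. by apply/eqP/ffunP => j; rewrite !mergeE; case: (j \in S). Qed.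
Lemma predB_merge x : predB (merge x0 x).
Proof. by apply/eqP/ffunP => j; rewrite !mergeE; case: (j \in S). Qed.

Definition emb (q : TA * TB) : X := merge (val q.1) (val q.2).
Definition embinv (x : X) : TA * TB :=
  (exist predA (merge x x0) (predA_merge x), exist predB (merge x0 x) (predB_merge x)).

Lemma valA (a : TA) j : j \notin S -> val a j = x0 j.
Proof. by move=> hj; rewrite -(eqP (valP a)) mergeE (negbTE hj). Qed.
Lemma valB (b : TB) j : j \in S -> val b j = x0 j.
Proof. by move=> hj; rewrite -(eqP (valP b)) mergeE hj. Qed.

Lemma embK : cancel emb embinv.
Proof.
  move=> [a b]; rewrite /emb /embinv /=; congr pair; apply: val_inj => /=;
    apply/ffunP => j; rewrite !mergeE; case: ifP => hj.
  - by rewrite hj.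
  - by rewrite valA // hj.
  - by rewrite valB.
  - by rewrite hj.
Qed.

Lemma embinvK : cancel embinv emb.
Proof.
move=> x; rewrite /emb /embinv /=; apply/ffunP => j; rewrite !mergeE.
by case: (j \in S).
Qed.

Lemma emb_bij : bijective emb.
Proof. exact: Bijective embK embinvK. Qed.

Lemma agreeA (q q' : TA * TB) : agree S (emb q) (emb q') = (q.1 == q'.1).
Proof.
case: q q' => [a b] [a' b'] /=.
apply/idP/idP.
  move=> /forallP H; apply/eqP; apply: val_inj; apply/ffunP => j.
  case: (boolP (j \in S)) => hj.
    by have := H j; rewrite hj /= /emb !mergeE hj => /eqP.
  by rewrite !valA.
move=> /eqP ->; apply/forallP => j; apply/implyP => hj.
by rewrite /emb !mergeE hj.
Qed.

Lemma agreeB (q q' : TA * TB) : agree (~: S) (emb q) (emb q') = (q.2 == q'.2).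
Proof.
case: q q' => [a b] [a' b'] /=.
apply/idP/idP.
  move=> /forallP H; apply/eqP; apply: val_inj; apply/ffunP => j.
  case: (boolP (j \in S)) => hj.
    by rewrite !valB.
  by have := H j; rewrite inE hj /= /emb !mergeE (negbTE hj) => /eqP.
move=> /eqP ->; apply/forallP => j; apply/implyP; rewrite inE => hj.
by rewrite /emb !mergeE (negbTE hj).
Qed.

Lemma sum_agreeA (F : X -> R) q :
  \sum_(z : X | agree S (emb q) z) F z = \sum_(b : TB) F (emb (q.1, b)).
Proof.
rewrite big_mkcond (sum_bij emb_bij) sumAB /=.
rewrite (bigD1 q.1) //= [X in _ + X]big1 ?addr0.
  by apply: eq_bigr => b _; rewrite agreeA /= eqxx.
move=> a ha; apply: big1 => b _; rewrite agreeA /= eq_sym (negbTE ha) //.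
Qed.

Lemma sum_agreeB (F : X -> R) q :
  \sum_(z : X | agree (~: S) (emb q) z) F z = \sum_(a : TA) F (emb (a, q.2)).
Proof.
rewrite big_mkcond (sum_bij emb_bij) sumBA /=.
rewrite (bigD1 q.2) //= [X in _ + X]big1 ?addr0.
  by apply: eq_bigr => a _; rewrite agreeB /= eqxx.
move=> b hb; apply: big1 => a _; rewrite agreeB /= eq_sym (negbTE hb) //.
Qed.
End Prod.
Section Gap0.
Local Open Scope classical_set_scope.
Lemma gap0 (R : realType) (X : finType) (mu : X -> R) Q :
  (forall f, variance mu f = 0) -> spectral_gap mu Q = 0.
Proof.
move=> H; rewrite /spectral_gap.
have -> : [set dirichlet mu Q f / variance mu f | f in [set f : X -> R | variance mu f != 0]] = set0.
  apply/seteqP; split => r // [f hf _]; by move: hf; rewrite /= H eqxx.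
exact: inf0.
Qed.
End Gap0.

Lemma swap_bij (A B : finType) : bijective (fun q : B * A => (q.2, q.1)).
Proof. by exists (fun q : A * B => (q.2, q.1)) => -[]. Qed.

Unset Implicit Arguments.
Theorem corollary2p31 (R : realType) (d : nat) (T : 'I_d -> finType)
  (pi : prodsp T -> R) (P : prodsp T -> prodsp T -> R) (S : {set 'I_d}) :
  is_positive_prob_mass pi ->
  S != finset.set0 ->
  is_transition_matrix P -> lazy_chain P -> ergodic P -> reversible pi P ->
  spectral_gap pi P <= spectral_gap (tens_dist S pi) (tens_chain S pi P) /\
  t_rel (tens_dist S pi) (tens_chain S pi P) <= t_rel pi P.
Proof.
move=> [pipos pisum] _ [P0 Pst] lz [irr _] rv.
have [x0 _|X0] := pickP (fun _ : prodsp T => true); last first.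
  exfalso; move: pisum; rewrite big1 => [/esym/eqP|x _]; first by rewrite oner_eq0.
  by have := X0 x.
pose e := @emb d T S x0.
have be : bijective e := emb_bij S x0.
pose einv := @embinv d T S x0.
have eK : forall q, einv (e q) = q := @embK d T S x0.
have Ke : forall x, e (einv x) = x := @embinvK d T S x0.
pose gam := spectral_gap pi P.
have pi0 : forall x, 0 <= pi x by move=> x; apply: ltW.
have Hgam : forall g, gam * variance pi g <= dirichlet pi P g.
  by move=> g; apply: gap_ub.
pose p := fun q => pi (e q).
pose K := fun q q' => P (e q) (e q').
have pp : forall q, 0 < p q by move=> q; exact: pipos.
have ps : \sum_q p q = 1 by rewrite -pisum (sum_bij be).
have K0 : forall q q', 0 <= K q q' by move=> q q'; exact: P0.
have stK : forall q, \sum_q' K q q' = 1 by move=> q; rewrite -(Pst (e q)) (sum_bij be).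
have lzK : lazy_chain K by move=> q; exact: lz.
have rvK : reversible p K by move=> q q'; exact: rv.
have HK : forall g, gam * variance p g <= dirichlet p K g.
  move=> g; pose g' := fun x => g (einv x).
  rewrite (@var_bij _ _ _ _ be pi g') ?(@dir_bij _ _ _ _ be pi P g') //.
  - by move=> q; rewrite /g' eK.
  - by move=> q; rewrite /g' eK.
pose sw := fun q : TB S x0 * TA S x0 => (q.2, q.1).
have bsw : bijective sw := swap_bij _ _.
pose p' := fun q => p (sw q).
pose K' := fun q q' => K (sw q) (sw q').
have pp' : forall q, 0 < p' q by move=> q; exact: pp.
have ps' : \sum_q p' q = 1 by rewrite -ps (sum_bij bsw).
have K0' : forall q q', 0 <= K' q q' by move=> q q'; exact: K0.
have stK' : forall q, \sum_q' K' q q' = 1 by move=> q; rewrite -(stK (sw q)) (sum_bij bsw).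
have lzK' : lazy_chain K' by move=> q; exact: lzK.
have rvK' : reversible p' K' by move=> q q'; exact: rvK.
have HK' : forall g, gam * variance p' g <= dirichlet p' K' g.
  move=> g; pose g' := fun q : TA S x0 * TB S x0 => g (q.2, q.1).
  rewrite (@var_bij _ _ _ _ bsw p g') ?(@dir_bij _ _ _ _ bsw p K g') //.
  - by move=> [].
  - by move=> [].
pose mu1 := m1 p; pose P1 := PP1 p K; pose mu2 := m1 p'; pose P2 := PP1 p' K'.
have TG := tensor_gap (fun a => ltW (m1_pos pp ps a)) (m1_sum ps)
  (PP1_ge0 pp ps K0) (PP1_st pp ps stK) (PP1_lazy pp ps K0 lzK) (PP1_rev pp ps rvK)
  (PP1_gap pp ps HK) (fun a => ltW (m1_pos pp' ps' a))
  (PP1_ge0 pp' ps' K0') (PP1_st pp' ps' stK') (PP1_rev pp' ps' rvK')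
  (PP1_gap pp' ps' HK').
have TD : forall q, tens_dist S pi (e q) = mu1 q.1 * mu2 q.2.
  by move=> q; rewrite /tens_dist /marg /e sum_agreeA sum_agreeB.
have TC : forall q q', tens_chain S pi P (e q) (e q') = P1 q.1 q'.1 * P2 q.2 q'.2.
  move=> q q'; rewrite /tens_chain /margP /marg /e !sum_agreeA !sum_agreeB.
  congr (_ * _).
    by under eq_bigr => b _ do rewrite sum_agreeA.
  by under eq_bigr => a _ do rewrite sum_agreeB.
have HT : forall f, gam * variance (tens_dist S pi) f <=
    dirichlet (tens_dist S pi) (tens_chain S pi P) f.
  move=> f; have := TG (fun q => f (e q)).
  rewrite (@var_bij _ _ _ _ be (tens_dist S pi) f)
     ?(@dir_bij _ _ _ _ be (tens_dist S pi) (tens_chain S pi P) f) //.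
have tpos : forall x, 0 < tens_dist S pi x.
  by move=> x; rewrite -(Ke x) TD; apply: mulr_gt0; apply: m1_pos.
have tsum : \sum_x tens_dist S pi x = 1.
  rewrite (sum_bij be); under eq_bigr => q _ do rewrite TD.
  rewrite sumAB /=; under eq_bigr => a _ do rewrite -mulr_sumr.
  by rewrite -mulr_suml /= (m1_sum ps) (m1_sum ps') mul1r.
have t0 : forall x, 0 <= tens_dist S pi x by move=> x; apply: ltW.
case: (boolP [exists x : prodsp T, exists y : prodsp T, x != y]) => [hex | hall].
  have [x hx] := existsP hex; have [y nxy] := existsP hx.
  have gle : gam <= spectral_gap (tens_dist S pi) (tens_chain S pi P).
    apply: gap_lb => //; exists (fun z => if z == x then 1 else 0).
    exact: (var_nonconst tpos nxy).
  have [c [cp Hc]] := gap_pos_bound x0 pipos pisum P0 irr.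
  have gp : 0 < gam.
    apply: (lt_le_trans cp); apply: gap_lb => //.
    exists (fun z => if z == x then 1 else 0).
    exact: (var_nonconst pipos nxy).
  split => //; rewrite /t_rel lef_pV2 ?posrE //; exact: (lt_le_trans gp).
have all1 : forall x y : prodsp T, x = y.
  move=> x y; apply/eqP; apply/negPn; apply/negP => nxy; move/negP: hall; apply.
  by apply/existsP; exists x; apply/existsP; exists y.
rewrite /gam in Hgam *.
rewrite (gap0 _ (fun f => var_const f all1 pisum)) (gap0 _ (fun f => var_const f all1 tsum)).
by rewrite /t_rel !(gap0 _ (fun f => var_const f all1 pisum)) (gap0 _ (fun f => var_const f all1 tsum)).
Qed.
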